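(* Let $S(t,p,q,x,y,u,v)=\sum_{\pi}t^{|\pi|}p^{\mathrm{asc}(\pi)}q^{\mathrm{des}(\pi)}x^{\mathrm{lmax}(\pi)}y^{\mathrm{rmax}(\pi)}u^{\mathrm{lmin}(\pi)}v^{\mathrm{rmin}(\pi)}$ over all separable permutations and $I(t,p,q,x,y,u,v)$ the same sum over irreducible separable permutations. Then $$S(t,p,q,x,y,u,v)-I(t,p,q,x,y,u,v)=p\,I(t,p,q,x,1,u,v)\,S(t,p,q,x,y,1,v)=p\,I(t,p,q,x,y,1,v)\,S(t,p,q,x,1,u,v).$$
   Context: A permutation of length $n$ is a word $\pi=\pi_1\cdots\pi_n$ containing each element of $[n]$ exactly once; $|\pi|=n$. For $\pi$ of length $m$, $\sigma$ of length $n$: $\pi\oplus\sigma=\pi_1\cdots\pi_m(\sigma_1+m)\cdots(\sigma_n+m)$, $\pi\ominus\sigma=(\pi_1+n)\cdots(\pi_m+n)\sigma_1\cdots\sigma_n$. Separable permutations are those of length $\ge1$ obtained from $1$ by repeatedly applying $\oplus,\ominus$ (equivalently, avoiding $2413$ and $3142$). The permutation $1$ is irreducible; a permutation of length $n\ge2$ is irreducible if there is no $i$, $2\le i\le n$, such that every element of $\pi_1\cdots\pi_{i-1}$ is less than every element of $\pi_i\cdots\pi_n$. $\mathrm{asc}(\pi)=\#\{i<n:\pi_i<\pi_{i+1}\}$, $\mathrm{des}(\pi)=\#\{i<n:\pi_i>\pi_{i+1}\}$; $\pi_i$ is a left-to-right maximum (minimum) if $\pi_i>\pi_j$ ($\pi_i<\pi_j$)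 for all $j<i$, a right-to-left maximum (minimum) if $\pi_i>\pi_j$ ($\pi_i<\pi_j$) for all $j>i$; $\mathrm{lmax},\mathrm{lmin},\mathrm{rmax},\mathrm{rmin}$ count these. (The paper writes $I(t,p,q,x,u,v)$ etc., omitting arguments equal to $1$.) *)

(* Defs.v *)
(* Permutations are words (seq nat) over [1..n], as in the paper. *)
From HB Require Import structures.
From mathcomp Require Import all_boot all_order all_algebra.
From mathcomp Require Import boolp.
Set Implicit Arguments. Unset Strict Implicit. Unset Printing Implicit Defensive.
Import GRing.Theory.
Local Open Scope ring_scope.

Definition oplus (a b : seq nat) : seq nat := a ++ map (fun j => (j + size a)%N) b.
Definition ominus (a b : seq nat) : seq nat := map (fun j => (j + size b)%N) a ++ b.

Inductive separable : seq nat -> Prop :=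
| sep_one : separable [:: 1%N]
| sep_oplus a b : separable a -> separable b -> separable (oplus a b)
| sep_ominus a b : separable a -> separable b -> separable (ominus a b).

(* irreducible: 1 is irreducible; for length >= 2, no i with 2 <= i <= n such that
   every element of pi_1..pi_{i-1} is less than every element of pi_i..pi_n *)
Definition irreducible (s : seq nat) : bool :=
  if size s == 1%N then true
  else ~~ has (fun i => all (fun a => all (fun b => a < b)%N (drop i.-1 s)) (take i.-1 s))
             (iota 2 (size s).-1).

Definition asc (s : seq nat) : nat := count (fun ab : nat * nat => ab.1 < ab.2)%N (zip s (behead s)).
Definition des (s : seq nat) : nat := count (fun ab : nat * nat => ab.1 > ab.2)%N (zip s (behead s)).
(* positions are 0-indexed here: position i holds pi_{i+1} *)
Definition lmax (s : seq nat) : nat :=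
  count (fun i => all (fun b => b < nth 0 s i)%N (take i s)) (iota 0 (size s)).
Definition lmin (s : seq nat) : nat :=
  count (fun i => all (fun b => nth 0 s i < b)%N (take i s)) (iota 0 (size s)).
Definition rmax (s : seq nat) : nat :=
  count (fun i => all (fun b => b < nth 0 s i)%N (drop i.+1 s)) (iota 0 (size s)).
Definition rmin (s : seq nat) : nat :=
  count (fun i => all (fun b => nth 0 s i < b)%N (drop i.+1 s)) (iota 0 (size s)).

Definition wt (R : comNzRingType) (p q x y u v : R) (s : seq nat) : R :=
  p ^+ asc s * q ^+ des s * x ^+ lmax s * y ^+ rmax s * u ^+ lmin s * v ^+ rmin s.

(* Formal power series in t, represented by the sequence of coefficients of t^n.
   permutations (iota 1 n) is the duplicate-free list of all permutations of [n]. *)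
Definition Sgf (R : comNzRingType) (p q x y u v : R) : nat -> R :=
  fun n => \sum_(s <- permutations (iota 1 n) | `[< separable s >]) wt p q x y u v s.

Definition Igf (R : comNzRingType) (p q x y u v : R) : nat -> R :=
  fun n => \sum_(s <- permutations (iota 1 n) | `[< separable s >] && irreducible s)
             wt p q x y u v s.

Definition ser_sub (R : comNzRingType) (f g : nat -> R) : nat -> R := fun n => f n - g n.
Definition ser_scale (R : comNzRingType) (c : R) (f : nat -> R) : nat -> R := fun n => c * f n.
Definition ser_mul (R : comNzRingType) (f g : nat -> R) : nat -> R :=
  fun n => \sum_(k < n.+1) f k * g (n - k)%N.

(* Main.v *)
Require Import Defs.
From HB Require Import structures.
From mathcomp Require Import all_boot all_order all_algebra.
From mathcomp Require Import boolp zify ring.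
Set Implicit Arguments. Unset Strict Implicit. Unset Printing Implicit Defensive.
Import GRing.Theory.

Local Notation P n := (permutations (iota 1 n)).
Local Notation sepb s := (`[< separable s >]).

Lemma size_oplus a b : size (oplus a b) = (size a + size b)%N.
Proof. by rewrite /oplus size_cat size_map. Qed.

Lemma perm_oplus a b : perm_eq a (iota 1 (size a)) -> perm_eq b (iota 1 (size b)) ->
  perm_eq (oplus a b) (iota 1 (size a + size b)).
Proof.
move=> pa pb; rewrite /oplus iotaD; apply: perm_cat => //.
have -> : iota (1 + size a) (size b) = map (fun j => (j + size a)%N) (iota 1 (size b)).
  rewrite addnC iotaDl; apply: eq_map => j; by rewrite addnC.
exact: perm_map.
Qed.

Lemma sep_perm s : separable s -> perm_eq s (iota 1 (size s)).
Proof.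
elim=> [//|a b _ pa _ pb|a b _ pa _ pb]; first by rewrite size_oplus; exact: perm_oplus.
have -> : size (ominus a b) = size (oplus b a) by rewrite /ominus size_oplus size_cat size_map addnC.
rewrite /ominus perm_catC size_oplus; exact: (perm_oplus pb pa).
Qed.

Lemma sep_size s : separable s -> (0 < size s)%N.
Proof. elim=> [//|a b _ pa _ pb|a b _ pa _ pb]; rewrite ?size_cat ?size_map; lia. Qed.

Lemma perm_iota_mem s n x : perm_eq s (iota 1 n) -> (x \in s) = (0 < x <= n)%N.
Proof. by move=> /perm_mem ->; rewrite mem_iota add1n ltnS. Qed.

Lemma sep_mem s x : separable s -> x \in s -> (0 < x <= size s)%N.
Proof. by move=> /sep_perm /perm_iota_mem ->. Qed.

Lemma last_cat_in (x : nat) s l : (0 < size l)%N -> last x (s ++ l) \in l.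
Proof. by case: l => // c0 c' _; rewrite last_cat /= mem_last. Qed.

Lemma sep_split s : separable s -> forall a c, s = a ++ c -> (0 < size a)%N -> (0 < size c)%N ->
  all (fun x => all (fun y => x < y)%N c) a ->
  separable a /\ separable (map (subn^~ (size a)) c).
Proof.
elim=> [|a0 b0 Ha0 IHa Hb0 IHb|a0 b0 Ha0 IHa Hb0 IHb] a c E Pa Pc Hac.
- have := congr1 size E; rewrite size_cat /=; lia.
- rewrite /oplus in E.
  have sE := congr1 size E; rewrite !size_cat size_map in sE.
  case: (ltngtP (size a) (size a0)) => [lt|gt|eq].
  + have Ea : a = take (size a) a0.
      by have := congr1 (take (size a)) E; rewrite take_cat lt take_size_cat.
    have Ec : c = drop (size a) a0 ++ map (fun j => (j + size a0)%N) b0.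
      by have := congr1 (drop (size a)) E; rewrite drop_cat lt drop_size_cat.
    have h1 : a0 = a ++ drop (size a) a0 by rewrite {1}Ea cat_take_drop.
    have h2 : (0 < size (drop (size a) a0))%N by rewrite size_drop; lia.
    have h3 : all (fun x => all (fun y => x < y)%N (drop (size a) a0)) a.
      by apply: sub_all Hac => z; rewrite Ec all_cat => /andP[].
    have [sa sa1] := IHa a (drop (size a) a0) h1 Pa h2 h3.
    split=> //.
    have -> : map (subn^~ (size a)) c = oplus (map (subn^~ (size a)) (drop (size a) a0)) b0.
      rewrite Ec map_cat /oplus size_map size_drop -map_comp; congr (_ ++ _).
      apply: eq_map => j /=; lia.
    exact: sep_oplus.
  + set d := (size a - size a0)%N.
    have Ea : a = a0 ++ map (fun j => (j + size a0)%N) (take d b0).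
      have := congr1 (take (size a)) E; rewrite take_cat ltnNge (ltnW gt) /= take_size_cat //.
      by rewrite map_take.
    have Ec : c = map (fun j => (j + size a0)%N) (drop d b0).
      have := congr1 (drop (size a)) E; rewrite drop_cat ltnNge (ltnW gt) /= drop_size_cat //.
      by rewrite map_drop.
    have sb1 : size (take d b0) = d by rewrite size_take; case: ifP => //; lia.
    have h2 : (0 < size (take d b0))%N by rewrite sb1; lia.
    have h2' : (0 < size (drop d b0))%N by rewrite size_drop; lia.
    have h3 : all (fun x => all (fun y => x < y)%N (drop d b0)) (take d b0).
      apply/allP => z zin; apply/allP => w win.
      have zz : (z + size a0)%N \in a by rewrite Ea mem_cat; apply/orP; right; apply/mapP; exists z.
      have ww : (w + size a0)%N \in c by rewrite Ec; apply/mapP; exists w.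
      by have := allP (allP Hac _ zz) _ ww; rewrite ltn_add2r.
    have [s1 s2] := IHb (take d b0) (drop d b0) (esym (cat_take_drop _ _)) h2 h2' h3.
    split; first by rewrite Ea; exact: sep_oplus.
    suff -> : map (subn^~ (size a)) c = map (subn^~ (size (take d b0))) (drop d b0) by [].
    rewrite Ec -map_comp sb1; apply: eq_map => j /=; rewrite /d; lia.
  + have Ea : a = a0.
      by have := congr1 (take (size a)) E; rewrite take_size_cat // take_size_cat.
    have Ec : c = map (fun j => (j + size a0)%N) b0.
      by have := congr1 (drop (size a)) E; rewrite drop_size_cat // drop_size_cat.
    split; first by rewrite Ea.
    rewrite Ec -map_comp map_id_in // => j _ /=; lia.
- exfalso; rewrite /ominus in E.
  case: a E Pa Hac => [//|x a'] E _ Hac.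
  case: a0 Ha0 IHa E => [/sep_size //|y a0'] Ha0 _ E.
  case: (E) => Ex _.
  have hz := last_cat_in 0 (x :: a') Pc.
  have hz2 := last_cat_in 0 ((y + size b0)%N :: map (fun j => (j + size b0)%N) a0') (sep_size Hb0).
  have El : last 0%N (((y + size b0)%N :: map (fun j => (j + size b0)%N) a0') ++ b0)
     = last 0%N ((x :: a') ++ c) := congr1 (last 0%N) E.
  move: (hz2); rewrite El => /(sep_mem Hb0) => /andP[_ h1].
  have := allP (allP Hac x (mem_head _ _)) _ hz.
  lia.
Qed.


Definition cut (s : seq nat) k := all (fun x => all (fun y => x < y)%N (drop k s)) (take k s).

Lemma irrE s : irreducible s = ~~ has (cut s) (iota 1 (size s).-1).
Proof.
rewrite /irreducible; case: eqP => [->//|_].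
rewrite (iotaDl 1 1) has_map; congr (~~ _); apply: eq_has => i /=.
Qed.

Lemma irr_cut s k : irreducible s -> (0 < k < size s)%N -> ~~ cut s k.
Proof.
rewrite irrE => /hasPn h hk; apply: h; rewrite mem_iota; lia.
Qed.

Lemma not_irr s : ~~ irreducible s -> exists k, (0 < k < size s)%N /\ cut s k.
Proof.
rewrite irrE negbK => /hasP [k]; rewrite mem_iota => hk ck; exists k; split=> //; lia.
Qed.

Lemma irrI s : (forall k, (0 < k < size s)%N -> ~~ cut s k) -> irreducible s.
Proof.
move=> h; rewrite irrE; apply/hasPn => k; rewrite mem_iota => hk; apply: h; lia.
Qed.

Section Oplus.
Variables a b : seq nat.
Hypothesis pa : perm_eq a (iota 1 (size a)).
Hypothesis pb : perm_eq b (iota 1 (size b)).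

Lemma cut_oplus_full : cut (oplus a b) (size a).
Proof.
rewrite /cut /oplus take_size_cat // drop_size_cat //.
apply/allP => x xa; apply/allP => z /mapP [y yb ->].
move: xa yb; rewrite (perm_iota_mem _ pa) (perm_iota_mem _ pb); lia.
Qed.

Lemma cut_oplus_l k : (k <= size a)%N -> cut (oplus a b) k = cut a k.
Proof.
move=> hk; rewrite /cut /oplus takel_cat //; apply: eq_in_all => x /mem_take xa.
rewrite drop_cat; case: ltnP => h.
  rewrite all_cat; suff -> : all (fun y => x < y)%N [seq (j + size a)%N | j <- b] by rewrite andbT.
  apply/allP => z /mapP [y yb ->]; move: xa yb; rewrite (perm_iota_mem _ pa) (perm_iota_mem _ pb); lia.
have -> : k = size a by lia.
rewrite subnn drop0 drop_size.
apply/allP => z /mapP [y yb ->]; move: xa yb; rewrite (perm_iota_mem _ pa) (perm_iota_mem _ pb); lia.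
Qed.

Lemma cut_oplus_r j : cut (oplus a b) (size a + j) = cut b j.
Proof.
rewrite /cut /oplus take_cat drop_cat ltnNge leq_addr /= addKn all_cat.
have -> : all (fun x => all (fun y => x < y)%N (drop j [seq (j0 + size a)%N | j0 <- b])) a.
  apply/allP => x xa; apply/allP => z /mem_drop /mapP [y yb ->].
  move: xa yb; rewrite (perm_iota_mem _ pa) (perm_iota_mem _ pb); lia.
rewrite /= -map_take -map_drop all_map; apply: eq_all => x /=.
rewrite all_map; apply: eq_all => y /=; by rewrite ltn_add2r.
Qed.

End Oplus.

Lemma oplus_red a b : separable a -> separable b -> ~~ irreducible (oplus a b).
Proof.
move=> sa sb; apply/negP => /irr_cut h.
have := h (size a); rewrite cut_oplus_full ?sep_perm // size_oplus.
have := sep_size sa; have := sep_size sb => h1 h2 h3.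
have : (0 < size a < size a + size b)%N by lia.
by move=> /h3.
Qed.

Lemma oplus_inj a b a' b' : size a = size a' -> oplus a b = oplus a' b' -> a = a' /\ b = b'.
Proof.
move=> hs E; have Ea := congr1 (take (size a)) E; have Eb := congr1 (drop (size a)) E.
rewrite /oplus take_size_cat // take_size_cat // in Ea.
rewrite /oplus drop_size_cat // drop_size_cat // hs in Eb.
split=> //; exact: inj_map (@addIn (size a')) _ _ Eb.
Qed.

Lemma split_at s k : separable s -> (0 < k < size s)%N -> cut s k ->
  [/\ separable (take k s), separable (map (subn^~ k) (drop k s))
    & s = oplus (take k s) (map (subn^~ k) (drop k s))].
Proof.
move=> Hs hk ck.
have sk : size (take k s) = k by rewrite size_take; case: ifP => //; lia.
have h1 : (0 < size (take k s))%N by rewrite sk; lia.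
have h2 : (0 < size (drop k s))%N by rewrite size_drop; lia.
have [sa sb] := sep_split Hs (esym (cat_take_drop k s)) h1 h2 ck.
rewrite sk in sb; split=> //.
rewrite /oplus sk -map_comp map_id_in ?cat_take_drop // => y yc /=.
have kin : k \in take k s by rewrite (perm_iota_mem _ (sep_perm sa)) sk; lia.
have := allP (allP ck k kin) y yc; lia.
Qed.


Definition cnt2 (r : nat -> nat -> bool) (s : seq nat) :=
  count (fun ab : nat * nat => r ab.1 ab.2) (zip s (behead s)).

Lemma cnt2_cons2 r x y t : cnt2 r (x :: y :: t) = (r x y + cnt2 r (y :: t))%N.
Proof. by []. Qed.

Lemma cnt2_cat r a c : (0 < size a)%N -> (0 < size c)%N ->
  cnt2 r (a ++ c) = (cnt2 r a + r (last 0%N a) (head 0%N c) + cnt2 r c)%N.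
Proof.
elim: a => [//|x a IH] _ Pc; case: a IH => [|z a] IH.
  by case: c Pc {IH} => [//|y c] _; rewrite cat1s cnt2_cons2.
rewrite !cat_cons !cnt2_cons2 -cat_cons IH //= !addnA; reflexivity.
Qed.

Lemma cnt2_map r f b : (forall x y, r (f x) (f y) = r x y) -> cnt2 r (map f b) = cnt2 r b.
Proof.
move=> hf; elim: b => [//|x b IH]; case: b IH => [//|y b] IH.
by rewrite map_cons map_cons cnt2_cons2 -map_cons IH hf.
Qed.

Lemma count_iota_cat (P : pred nat) A C :
  count P (iota 0 (A + C)) = (count P (iota 0 A) + count (fun j => P (A + j)%N) (iota 0 C))%N.
Proof. by rewrite iotaD count_cat add0n -{2}(addn0 A) iotaDl count_map. Qed.

Lemma L_lt (a c : seq nat) i : (i < size a)%N ->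
  [/\ nth 0%N (a ++ c) i = nth 0%N a i, take i (a ++ c) = take i a
    & drop i.+1 (a ++ c) = drop i.+1 a ++ c].
Proof.
move=> hi; rewrite nth_cat hi takel_cat ?(ltnW hi) // drop_cat; split=> //.
case: ltnP => // h; have -> : i.+1 = size a by lia.
by rewrite subnn drop0 drop_size.
Qed.

Lemma L_ge (a c : seq nat) j :
  [/\ nth 0%N (a ++ c) (size a + j) = nth 0%N c j, take (size a + j) (a ++ c) = a ++ take j c
    & drop (size a + j).+1 (a ++ c) = drop j.+1 c].
Proof.
rewrite nth_cat take_cat drop_cat ltnNge leq_addr /= addKn.
have -> : ((size a + j).+1 < size a)%N = false by lia.
by rewrite -addnS addKn.
Qed.

Lemma last_in (s : seq nat) : (0 < size s)%N -> last 0%N s \in s.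
Proof. by case: s => // x s _; exact: mem_last. Qed.

Lemma perm_le (s : seq nat) n (x : nat) : perm_eq s (iota 1 n) -> x \in s -> (0 < x <= n)%N.
Proof. by move=> p; rewrite (perm_iota_mem _ p). Qed.

Section Stats.
Variables a b : seq nat.
Hypothesis pa : perm_eq a (iota 1 (size a)).
Hypothesis pb : perm_eq b (iota 1 (size b)).
Hypothesis na : (0 < size a)%N.
Hypothesis nb : (0 < size b)%N.
Let B := map (fun j => (j + size a)%N) b.
Let ma x : (x \in a) = (0 < x <= size a)%N := perm_iota_mem _ pa.
Let mb x : (x \in b) = (0 < x <= size b)%N := perm_iota_mem _ pb.
Let mB x : x \in B -> (size a < x)%N.
Proof. move=> /mapP [y yb ->]; move: yb; rewrite mb => /andP[h1 _]; rewrite -{1}[size a]add0n ltn_add2r. exact h1. Qed.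
Let nthb j : (j < size b)%N -> (0 < nth 0%N b j)%N.
Proof. by move=> hj; have := mem_nth 0%N hj; rewrite mb => /andP[]. Qed.
Let ntha i : (i < size a)%N -> (nth 0%N a i <= size a)%N.
Proof. by move=> hi; have := mem_nth 0%N hi; rewrite ma => /andP[]. Qed.

Let la : (last 0%N a <= size a)%N.
Proof. by have /andP[] := perm_le pa (last_in na). Qed.
Let hB : head 0%N B = (nth 0%N b 0 + size a)%N.
Proof. by rewrite /B -nth0 (nth_map 0%N). Qed.
Let hb0 : (0 < nth 0%N b 0)%N := nthb nb.

Lemma asc_oplus : asc (oplus a b) = (asc a + 1 + asc b)%N.
Proof.
change (cnt2 ltn (a ++ B) = cnt2 ltn a + 1 + cnt2 ltn b)%N.
rewrite cnt2_cat ?size_map // cnt2_map; last by move=> x y /=; exact: ltn_add2r.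
rewrite hB.
have h : (last 0%N a < nth 0%N b 0 + size a)%N by lia.
by rewrite /ltn /= h.
Qed.

Lemma des_oplus : des (oplus a b) = (des a + des b)%N.
Proof.
change (cnt2 (fun x y => y < x)%N (a ++ B) = cnt2 (fun x y => y < x)%N a + cnt2 (fun x y => y < x)%N b)%N.
rewrite cnt2_cat ?size_map // cnt2_map; last by move=> x y /=; exact: ltn_add2r.
rewrite hB.
have -> : (nth 0%N b 0 + size a < last 0%N a)%N = false by lia.
by rewrite addn0.
Qed.

Lemma lmax_oplus : lmax (oplus a b) = (lmax a + lmax b)%N.
Proof.
rewrite /lmax size_oplus /oplus -/B count_iota_cat; congr (_ + _)%N.
  apply: eq_in_count => i; rewrite mem_iota => hi /=.
  have hi' : (i < size a)%N by lia.
  by have [-> -> _] := L_lt B hi'.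
apply: eq_in_count => j; rewrite mem_iota => hj /=.
have hj' : (j < size b)%N by lia.
have [-> -> _] := L_ge a B j.
rewrite /B (nth_map 0%N) // all_cat -map_take all_map.
have -> : all (fun x => x < nth 0%N b j + size a)%N a.
  apply/allP => x xa; have /andP[_ h1] := perm_le pa xa; have := nthb hj'; lia.
by apply: eq_all => x /=; rewrite ltn_add2r.
Qed.

Lemma lmin_oplus : lmin (oplus a b) = lmin a.
Proof.
rewrite /lmin size_oplus /oplus -/B count_iota_cat.
rewrite [X in (_ + X)%N](@eq_in_count _ _ pred0); last first.
  move=> j; rewrite mem_iota => hj /=.
  have hj' : (j < size b)%N by lia.
  have [-> -> _] := L_ge a B j.
  rewrite /B (nth_map 0%N) // all_cat.
  have /andP[_ h1] := perm_le pa (mem_nth 0%N na).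
  apply/negbTE/negP => /andP[/allP /(_ _ (mem_nth 0%N na))].
  have := nthb hj'; lia.
rewrite count_pred0 addn0.
apply: eq_in_count => i; rewrite mem_iota => hi /=.
have hi' : (i < size a)%N by lia.
by have [-> -> _] := L_lt B hi'.
Qed.

Let hBin : nth 0%N B 0 \in B.
Proof. by apply: mem_nth; rewrite size_map. Qed.
Let hB0 : nth 0%N B 0 = (nth 0%N b 0 + size a)%N.
Proof. by rewrite /B (nth_map 0%N). Qed.

Lemma rmax_oplus : rmax (oplus a b) = rmax b.
Proof.
rewrite /rmax size_oplus /oplus -/B count_iota_cat.
rewrite [X in (X + _)%N](@eq_in_count _ _ pred0); last first.
  move=> i; rewrite mem_iota => hi /=.
  have hi' : (i < size a)%N by lia.
  have [-> _ ->] := L_lt B hi'.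
  rewrite all_cat; apply/negbTE/negP => /andP[_ /allP /(_ _ hBin)].
  rewrite hB0; have := ntha hi'; lia.
rewrite count_pred0 add0n.
apply: eq_in_count => j; rewrite mem_iota => hj /=.
have hj' : (j < size b)%N by lia.
have [-> _ ->] := L_ge a B j.
rewrite /B (nth_map 0%N) // -map_drop all_map.
by apply: eq_all => x /=; rewrite ltn_add2r.
Qed.

Lemma rmin_oplus : rmin (oplus a b) = (rmin a + rmin b)%N.
Proof.
rewrite /rmin size_oplus /oplus -/B count_iota_cat; congr (_ + _)%N.
  apply: eq_in_count => i; rewrite mem_iota => hi /=.
  have hi' : (i < size a)%N by lia.
  have [-> _ ->] := L_lt B hi'.
  rewrite all_cat.
  have -> : all (fun y => nth 0%N a i < y)%N B.
    apply/allP => z zB; have := mB zB; have := ntha hi'; lia.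
  by rewrite andbT.
apply: eq_in_count => j; rewrite mem_iota => hj /=.
have hj' : (j < size b)%N by lia.
have [-> _ ->] := L_ge a B j.
rewrite /B (nth_map 0%N) // -map_drop all_map.
by apply: eq_all => x /=; rewrite ltn_add2r.
Qed.

End Stats.

Lemma wt_oplus (R : comNzRingType) (p q x y u v : R) a b : separable a -> separable b ->
  wt p q x y u v (oplus a b) = (p * (wt p q x 1 u v a * wt p q x y 1 v b))%R.
Proof.
move=> sa sb; have pa := sep_perm sa; have pb := sep_perm sb.
have na := sep_size sa; have nb := sep_size sb.
rewrite /wt asc_oplus // des_oplus // lmax_oplus // rmax_oplus // lmin_oplus // rmin_oplus //.
rewrite !exprD !expr1n expr1; ring.
Qed.



Lemma uniq_flatten_map (T1 T2 : eqType) (f : T1 -> seq T2) r : uniq r ->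
  (forall k, k \in r -> uniq (f k)) ->
  (forall k k' z, k \in r -> k' \in r -> z \in f k -> z \in f k' -> k = k') ->
  uniq (flatten (map f r)).
Proof.
elim: r => [//|k r IH] /= /andP[kr ur] hu hd.
rewrite cat_uniq hu ?mem_head //= IH //; last first.
- by move=> k1 k2 z h1 h2; apply: hd; rewrite in_cons ?h1 ?h2 orbT.
- by move=> k1 h1; apply: hu; rewrite in_cons h1 orbT.
rewrite andbT; apply/hasPn => z /flattenP [t /mapP [k' k'r ->] zk']; apply/negP => zk.
have k'in : k' \in k :: r by rewrite in_cons k'r orbT.
have ek := hd k k' z (mem_head _ _) k'in zk zk'.
by move: kr; rewrite ek k'r.
Qed.

Lemma size_P s n : s \in P n -> size s = n.
Proof. by rewrite mem_permutations => /perm_size; rewrite size_iota. Qed.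

Lemma decomp (R : comNzRingType) (F : seq nat -> R) (PA PB : pred (seq nat)) (g : nat -> nat) n :
  (forall a, PA a -> separable a) -> (forall b, PB b -> separable b) ->
  (forall a b a' b', PA a -> PB b -> PA a' -> PB b' -> oplus a b = oplus a' b' -> size a = size a') ->
  (forall s, separable s -> ~~ irreducible s -> exists a b, [/\ PA a, PB b & s = oplus a b]) ->
  (forall k, (k <= n)%N -> (g k <= n)%N) ->
  (forall j, (j <= n)%N -> exists2 k, (k <= n)%N & g k = j) ->
  (forall k k', (k <= n)%N -> (k' <= n)%N -> g k = g k' -> k = k') ->
  (\sum_(s <- P n | sepb s && ~~ irreducible s) F s =
  \sum_(k < n.+1) \sum_(a <- P (g k) | PA a) \sum_(b <- P (n - g k) | PB b) F (oplus a b))%R.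
Proof.
move=> hA hB h2 h3 g1 g2 g3.
pose Tk k := [seq oplus a b | a <- filter PA (P (g k)), b <- filter PB (P (n - g k))].
have E1 k : (\sum_(a <- P (g k) | PA a) \sum_(b <- P (n - g k) | PB b) F (oplus a b)
    = \sum_(s <- Tk k) F s)%R.
  by rewrite /Tk big_allpairs_dep big_filter; apply: eq_bigr => a _; rewrite big_filter.
rewrite [RHS](eq_bigr (fun k : 'I_n.+1 => (\sum_(s <- Tk k) F s)%R)); last by move=> k _; exact: E1.
rewrite -(big_mkord xpredT (fun k => (\sum_(s <- Tk k) F s)%R)).
have E2 : (\sum_(s <- flatten (map Tk (index_iota 0 n.+1))) F s = \sum_(0 <= k < n.+1) \sum_(s <- Tk k) F s)%R.
  by rewrite big_flatten big_map.
rewrite -E2.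
rewrite -big_filter; apply: perm_big.
rewrite /index_iota subn0.
apply: uniq_perm.
- by apply: filter_uniq; exact: permutations_uniq.
- apply: uniq_flatten_map; first exact: iota_uniq.
  + move=> k _; apply: allpairs_uniq; try (apply: filter_uniq; exact: permutations_uniq).
    move=> [a b] [a' b'] /allpairsP [[a1 b1] [/= ha1 hb1 [-> ->]]].
    move=> /allpairsP [[a2 b2] [/= ha2 hb2 [-> ->]]] /= E.
    move: ha1 hb1 ha2 hb2; rewrite !mem_filter => /andP[pa1 _] /andP[pb1 _] /andP[pa2 _] /andP[pb2 _].
    by have [-> ->] := oplus_inj (h2 _ _ _ _ pa1 pb1 pa2 pb2 E) E.
  + move=> k k' z; rewrite !mem_iota => hk hk'.
    move=> /allpairsP [[a1 b1] [/= ha1 hb1 ->]] /allpairsP [[a2 b2] [/= ha2 hb2 E]].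
    move: ha1 hb1 ha2 hb2; rewrite !mem_filter => /andP[pa1 ia1] /andP[pb1 _] /andP[pa2 ia2] /andP[pb2 _].
    have := h2 _ _ _ _ pa1 pb1 pa2 pb2 E; rewrite (size_P ia1) (size_P ia2).
    apply: g3; lia.
- move=> s; rewrite mem_filter; apply/idP/idP.
  + move=> /andP[/andP[/asboolP ss nirr] sP].
    have [a [b [pa pb E]]] := h3 s ss nirr.
    have sn := size_P sP; rewrite E size_oplus in sn.
    have sal : (size a <= n)%N by lia.
    have [k kn gk] := g2 (size a) sal.
    apply/flattenP; exists (Tk k); first by apply/mapP; exists k; rewrite ?mem_iota //; lia.
    apply/allpairsP; exists (a, b); split => //=; rewrite mem_filter ?pa ?pb /= mem_permutations.
      by rewrite gk; exact: sep_perm (hA _ pa).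
    have -> : (n - g k)%N = size b by lia.
    exact: sep_perm (hB _ pb).
  + move=> /flattenP [t /mapP [k kin ->] /allpairsP [[a b] [/= ha hb ->]]].
    move: ha hb; rewrite !mem_filter => /andP[pa ia] /andP[pb ib].
    have sa := hA _ pa; have sb := hB _ pb.
    rewrite (asboolT (sep_oplus sa sb)) oplus_red //= mem_permutations.
    have -> : n = (size a + size b)%N.
      rewrite (size_P ia) (size_P ib); move: kin; rewrite mem_iota => kin.
      have := g1 k; lia.
    exact: perm_oplus (sep_perm sa) (sep_perm sb).
Qed.



Lemma h2A_aux a b a' b' : separable a -> separable b -> separable a' -> separable b' ->
  irreducible a' -> (size a < size a')%N -> oplus a b = oplus a' b' -> False.
Proof.
move=> sa sb sa' sb' ia' h E.
have c1 := cut_oplus_full (sep_perm sa) (sep_perm sb).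
rewrite E (cut_oplus_l (sep_perm sa') (sep_perm sb') (ltnW h)) in c1.
have hk : (0 < size a < size a')%N by rewrite h andbT; exact: sep_size.
by move: (irr_cut ia' hk); rewrite c1.
Qed.

Lemma h2B_aux a b a' b' : separable a -> separable b -> separable a' -> separable b' ->
  irreducible b -> (size a < size a')%N -> oplus a b = oplus a' b' -> False.
Proof.
move=> sa sb sa' sb' ib h E.
have c1 := cut_oplus_full (sep_perm sa') (sep_perm sb').
have sE := congr1 size E; rewrite !size_oplus in sE.
have nb' := sep_size sb'.
rewrite -E in c1.
have e : size a' = (size a + (size a' - size a))%N by lia.
rewrite e (cut_oplus_r (sep_perm sa) (sep_perm sb)) in c1.
have hk : (0 < size a' - size a < size b)%N by lia.
by move: (irr_cut ib hk); rewrite c1.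
Qed.

Lemma h3A s : separable s -> ~~ irreducible s ->
  exists a b, [/\ sepb a && irreducible a, sepb b & s = oplus a b].
Proof.
move=> ss nirr.
have ex : exists k, (0 < k < size s)%N && cut s k.
  by have [k [hk ck]] := not_irr nirr; exists k; rewrite hk ck.
case: (ex_minnP ex) => k /andP[hk ck] hmin.
have [sa sb E] := split_at ss hk ck.
set a := take k s in sa E *; set b := map _ _ in sb E *.
exists a, b; split; rewrite ?(asboolT sa) ?(asboolT sb) //=.
have sk : size a = k by rewrite /a size_take; case: ifP => //; lia.
apply: irrI => j hj; apply/negP => cj.
have cs : cut s j.
  by rewrite E (cut_oplus_l (sep_perm sa) (sep_perm sb)) //; lia.
have : (0 < j < size s)%N && cut s j by rewrite cs andbT; lia.
move=> /hmin; lia.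
Qed.

Lemma h3B s : separable s -> ~~ irreducible s ->
  exists a b, [/\ sepb a, sepb b && irreducible b & s = oplus a b].
Proof.
move=> ss nirr.
have ex : exists k, (0 < k < size s)%N && cut s k.
  by have [k [hk ck]] := not_irr nirr; exists k; rewrite hk ck.
have ub : forall k, (0 < k < size s)%N && cut s k -> (k <= size s)%N.
  by move=> k /andP[hk _]; lia.
case: (ex_maxnP ex ub) => k /andP[hk ck] hmax.
have [sa sb E] := split_at ss hk ck.
set a := take k s in sa E *; set b := map _ _ in sb E *.
exists a, b; split; rewrite ?(asboolT sa) ?(asboolT sb) //=.
have sk : size a = k by rewrite /a size_take; case: ifP => //; lia.
have sE := congr1 size E; rewrite size_oplus in sE.
apply: irrI => j hj; apply/negP => cj.
have cs : cut s (k + j).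
  by rewrite E -sk (cut_oplus_r (sep_perm sa) (sep_perm sb)).
have : (0 < k + j < size s)%N && cut s (k + j) by rewrite cs andbT; lia.
move=> /hmax; lia.
Qed.

Local Open Scope ring_scope.


Theorem theorem10 (R : comNzRingType) (p q x y u v : R) :
  ser_sub (Sgf p q x y u v) (Igf p q x y u v)
    = ser_scale p (ser_mul (Igf p q x 1 u v) (Sgf p q x y 1 v))
  /\ ser_sub (Sgf p q x y u v) (Igf p q x y u v)
    = ser_scale p (ser_mul (Igf p q x y 1 v) (Sgf p q x 1 u v)).
Proof.
have LHS n : ser_sub (Sgf p q x y u v) (Igf p q x y u v) n
    = \sum_(s <- P n | sepb s && ~~ irreducible s) wt p q x y u v s.
  by rewrite /ser_sub /Sgf /Igf (bigID irreducible) /= addrC addrK.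
split; apply: funext => n; rewrite LHS /ser_scale /ser_mul.
- rewrite (@decomp _ _ (fun s => sepb s && irreducible s) (fun s => sepb s) id n).
  + rewrite big_distrr; apply: eq_bigr => k _ /=; rewrite big_distrl big_distrr /=.
    rewrite big_seq_cond [RHS]big_seq_cond; apply: eq_bigr => a /andP[_ /andP[/asboolP sa _]].
    rewrite big_distrr big_distrr /=; apply: eq_bigr => b /asboolP sb.
    exact: wt_oplus.
  + by move=> a /andP[/asboolP].
  + by move=> b /asboolP.
  + move=> a b a' b' /andP[/asboolP sa ia] /asboolP sb /andP[/asboolP sa' ia'] /asboolP sb' E.
    case: (ltngtP (size a) (size a')) => // h; exfalso.
      exact: h2A_aux sa sb sa' sb' ia' h E.
    exact: h2A_aux sa' sb' sa sb ia h (esym E).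
  + exact: h3A.
  + by [].
  + by move=> j hj; exists j.
  + by [].
- rewrite (@decomp _ _ (fun s => sepb s) (fun s => sepb s && irreducible s) (fun k => n - k)%N n).
  + rewrite big_distrr; apply: eq_bigr => [[k hk]] _ /=.
    rewrite subKn // exchange_big big_distrl big_distrr /=.
    rewrite big_seq_cond [RHS]big_seq_cond; apply: eq_bigr => b /andP[_ /andP[/asboolP sb _]].
    rewrite big_distrr big_distrr /=; apply: eq_bigr => a /asboolP sa.
    by rewrite wt_oplus // (mulrC (wt _ _ _ _ _ _ b)).
  + by move=> a /asboolP.
  + by move=> b /andP[/asboolP].
  + move=> a b a' b' /asboolP sa /andP[/asboolP sb ib] /asboolP sa' /andP[/asboolP sb' ib'] E.
    case: (ltngtP (size a) (size a')) => // h; exfalso.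
      exact: h2B_aux sa sb sa' sb' ib h E.
    exact: h2B_aux sa' sb' sa sb ib' h (esym E).
  + exact: h3B.
  + by move=> k _; exact: leq_subr.
  + by move=> j hj; exists (n - j)%N; rewrite ?leq_subr ?subKn.
  + move=> k k' hk hk' e; lia.
Qed.
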